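(* Let $(M,J)$ be a complex manifold and let $\psi^k:H^k_J(M)\otimes\mathbb C\to H^k_{\bar\partial}(M)$ be the natural map sending the class of $\alpha$ (which is $\mathrm d$-closed and $\mathcal L_J$-closed, hence $\bar\partial$-closed) to its class in $H^k_{\bar\partial}(M)$. Then $\psi^k$ is well defined, and $M$ satisfies the $\partial\bar\partial$-lemma in degree $k$ if and only if $\psi^k$ is injective and $\psi^{k-1}$ is surjective.
   Context: For a vector-valued $k$-form $K=K^je_j$ on $M$, $\iota_K\alpha=K^j\wedge(\iota_{e_j}\alpha)$ and $\mathcal L_K=\iota_K\mathrm d-(-1)^{k-1}\mathrm d\iota_K$; for integrable $J$, complex-linearly extended, $\mathcal L_J=i(\partial-\bar\partial)$ and $\mathrm d=\partial+\bar\partial$. $H^k_J(M)$ is the $k$-th cohomology of $((\ker\mathcal L_J)^\bullet,\mathrm d)$ where $(\ker\mathcal L_J)^k$ are the real $k$-forms killed by $\mathcal L_J$; $H^k_J(M)\otimes\mathbb C$ is the corresponding cohomology of complex forms. $H^k_{\bar\partial}(M)=\ker(\bar\partial:\Omega^k_{\mathbb C}\to\Omega^{k+1}_{\mathbb C})/\bar\partial(\Omega^{k-1}_{\mathbb C})$ (total degree $k$ complex forms). $M$ satisfies the $\partial\bar\partial$-lemma in degree $k$ if for every $\alpha\in\Omega^k(M)\otimes\mathbb C$: $\alpha$ is $\partial$-closed, $\bar\partial$-closed and $\mathrm d$-exact if and only if $\alpha=\partial\bar\partial\beta$ for some complex $(k-2)$-form $\beta$. *)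

(* Defs.v *)
(* Abstract algebraic model of the complex-valued differential
   forms of a complex manifold: a bounded double complex of algC-vector spaces. *)
From HB Require Import structures.
From mathcomp Require Import all_boot all_order all_algebra all_field.
Set Implicit Arguments. Unset Strict Implicit. Unset Printing Implicit Defensive.
Import Order.TTheory GRing.Theory Num.Theory.
Local Open Scope ring_scope.

Section DoubleComplex.
Variable V : lmodType algC.
(* pr p q : projection of a form onto its (p,q)-component *)
Variable pr : nat -> nat -> V -> V.
Variables del delb : V -> V.

Definition is_dcomplex (n : nat) : Prop :=
  [/\ [/\ (forall p q, linear (pr p q)), linear del & linear delb],
      (forall p q p' q' v, pr p q (pr p' q' v) = if (p == p') && (q == q') then pr p q v else 0),
      (forall p q v, (n < p)%N \/ (n < q)%N -> pr p q v = 0),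
      (forall v, v = \sum_(p < n.+1) \sum_(q < n.+1) pr p q v) &
   [/\ (forall p q v, del (pr p q v) = pr p.+1 q (del v)),
       (forall p q v, delb (pr p q v) = pr p q.+1 (delb v)),
       (forall v, del (del v) = 0),
       (forall v, delb (delb v) = 0) &
       (forall v, del (delb v) + delb (del v) = 0)]].

(* total degree k (an integer; negative degrees contain only 0) *)
Definition is_deg (k : int) (v : V) : Prop :=
  match k with
  | Posz k => v = \sum_(p < k.+1) pr p (k - p) v
  | Negz _ => v = 0
  end.

Definition dd (v : V) : V := del v + delb v.
Definition LJ (v : V) : V := 'i *: (del v - delb v).

(* cocycles / coboundaries of ((ker L_J)^•, d) in degree k *)
Definition J_closed (k : int) (a : V) : Prop := [/\ is_deg k a, LJ a = 0 & dd a = 0].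
Definition J_exact (k : int) (a : V) : Prop :=
  exists g, [/\ is_deg (k - 1) g, LJ g = 0 & a = dd g].

Definition dbar_closed (k : int) (a : V) : Prop := is_deg k a /\ delb a = 0.
Definition dbar_exact (k : int) (a : V) : Prop :=
  exists b, is_deg (k - 1) b /\ a = delb b.

Definition psi_injective (k : int) : Prop :=
  forall a, J_closed k a -> dbar_exact k a -> J_exact k a.
Definition psi_surjective (k : int) : Prop :=
  forall b, dbar_closed k b -> exists a, J_closed k a /\ dbar_exact k (b - a).

Definition ddbar_lemma (k : int) : Prop :=
  forall a, is_deg k a ->
    ((del a = 0 /\ delb a = 0 /\ exists g, is_deg (k - 1) g /\ a = dd g)
     <-> exists b, is_deg (k - 2) b /\ a = del (delb b)).
End DoubleComplex.

(* Main.v *)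
Require Import Defs.
From HB Require Import structures.
From mathcomp Require Import all_boot all_order all_algebra all_field.
From mathcomp Require Import zify ring.
Set Implicit Arguments. Unset Strict Implicit. Unset Printing Implicit Defensive.
Import Order.TTheory GRing.Theory Num.Theory.
Local Open Scope ring_scope.

Section Lin.
Variables (U W : lmodType algC) (f : U -> W).
Hypothesis fL : linear f.
Lemma lin0 : f 0 = 0.
Proof. have := fL 1 0 0; rewrite !scale1r !addr0 => h.
by apply: (addrI (f 0)); rewrite addr0 -h. Qed.
Lemma linD x y : f (x + y) = f x + f y.
Proof. by have := fL 1 x y; rewrite !scale1r. Qed.
Lemma linZ a x : f (a *: x) = a *: f x.
Proof. by have := fL a x 0; rewrite !addr0 lin0 addr0. Qed.
Lemma linN x : f (- x) = - f x.
Proof. by rewrite -scaleN1r linZ scaleN1r. Qed.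
Lemma linB x y : f (x - y) = f x - f y.
Proof. by rewrite linD linN. Qed.
Lemma linS I (r : seq I) (P : pred I) (F : I -> U) :
  f (\sum_(i <- r | P i) F i) = \sum_(i <- r | P i) f (F i).
Proof. exact: (big_morph f linD lin0). Qed.
End Lin.

Lemma sumif (V : lmodType algC) (F : nat -> V) N j :
  \sum_(p < N) (if (p : nat) == j then F p else 0) = if (j < N)%N then F j else 0.
Proof.
elim: N => [|N IH]; first by rewrite big_ord0.
rewrite big_ord_recr /= IH ltnS.
by case: (ltngtP j N) => [h|h|->]; rewrite ?addr0 ?eqxx ?ltnn ?add0r // (gtn_eqF h) addr0.
Qed.

Section DC.
Variables (V : lmodType algC) (pr : nat -> nat -> V -> V) (del delb : V -> V) (n : nat).
Hypothesis H : is_dcomplex pr del delb n.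

Let prL p q : linear (pr p q). Proof. by have [[h _ _] _ _ _ _] := H. Qed.
Let delL : linear del. Proof. by have [[_ h _] _ _ _ _] := H. Qed.
Let delbL : linear delb. Proof. by have [[_ _ h] _ _ _ _] := H. Qed.
Let prpr p q p' q' v : pr p q (pr p' q' v) = if (p == p') && (q == q') then pr p q v else 0.
Proof. by have [_ h _ _ _] := H. Qed.
Let bnd p q v : (n < p)%N \/ (n < q)%N -> pr p q v = 0.
Proof. by have [_ _ h _ _] := H; apply: h. Qed.
Let dec v : v = \sum_(p < n.+1) \sum_(q < n.+1) pr p q v.
Proof. by have [_ _ _ h _] := H. Qed.
Let dpr p q v : del (pr p q v) = pr p.+1 q (del v).
Proof. by have [_ _ _ _ [h _ _ _ _]] := H. Qed.
Let dbpr p q v : delb (pr p q v) = pr p q.+1 (delb v).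
Proof. by have [_ _ _ _ [_ h _ _ _]] := H. Qed.
Let prZ p q := linZ (prL p q).
Let prD p q := linD (prL p q).
Let prS p q := linS (prL p q).
Let prN p q := linN (prL p q).
Let prB p q := linB (prL p q).
Let dZ := linZ delL. Let dD := linD delL. Let dS := linS delL. Let dN := linN delL. Let dB := linB delL.
Let d0 := lin0 delL. Let b0 := lin0 delbL.
Let bZ := linZ delbL. Let bD := linD delbL. Let bS := linS delbL. Let bN := linN delbL. Let bB := linB delbL.
Lemma dd0 v : del (del v) = 0.
Proof. by have [_ _ _ _ [_ _ h _ _]] := H. Qed.
Lemma dbdb0 v : delb (delb v) = 0.
Proof. by have [_ _ _ _ [_ _ _ h _]] := H. Qed.
Lemma anti v : delb (del v) = - del (delb v).
Proof. have [_ _ _ _ [_ _ _ _ /(_ v) h]] := H; apply/eqP; by rewrite -addr_eq0 addrC h. Qed.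

Lemma ext x y : (forall p q, pr p q x = pr p q y) -> x = y.
Proof.
move=> h; rewrite (dec x) (dec y); apply: eq_bigr => p _; apply: eq_bigr => q _; exact: h.
Qed.

Lemma pr0 p q : pr p q 0 = 0. Proof. exact: lin0. Qed.

Lemma sum2if (G : nat -> nat -> V) p q :
  \sum_(p' < n.+1) \sum_(q' < n.+1) (if ((p' : nat) == p) && ((q' : nat) == q) then G p' q' else 0)
  = if (p < n.+1)%N && (q < n.+1)%N then G p q else 0.
Proof.
rewrite (eq_bigr (fun p' : 'I_n.+1 => if (p' : nat) == p then
    \sum_(q' < n.+1) (if (q' : nat) == q then G p q else 0) else 0)); last first.
  move=> p' _; case: eqP => [->|_]; last by rewrite big1 // => q' _; rewrite andbF.
  by apply: eq_bigr => q' _; case: eqP => [->|].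
rewrite (sumif (fun _ => \sum_(q' < n.+1) (if (q' : nat) == q then G p q else 0))).
rewrite (sumif (fun _ => G p q)).
by case: (p < n.+1)%N; case: (q < n.+1)%N.
Qed.

Lemma pr_sum (w : nat -> algC) p q v :
  pr p q (\sum_(p' < n.+1) \sum_(q' < n.+1) w p' *: pr p' q' v) = w p *: pr p q v.
Proof.
rewrite prS.
under eq_bigr => p' _ do (rewrite prS; under eq_bigr => q' _ do rewrite prZ prpr).
rewrite (_ : \sum_(_ < _) _ = \sum_(p' < n.+1) \sum_(q' < n.+1)
   (if ((p' : nat) == p) && ((q' : nat) == q) then w p' *: pr p' q' v else 0)).
  rewrite (sum2if (fun p0 q0 => w p0 *: pr p0 q0 v)); case: ifP => // /negbT; rewrite negb_and -!leqNgt => h.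
  by rewrite bnd ?scaler0 //; case/orP: h; [left|right].
apply: eq_bigr => p' _; apply: eq_bigr => q' _.
case: (eqVneq (p' : nat) p) => [<-|ne]; case: (eqVneq (q' : nat) q) => [<-|ne'];
  rewrite ?eqxx /= ?andbF ?(negPf ne) ?(negPf ne') /= ?andbF ?scaler0 //;
  by rewrite ?(eq_sym p) ?(eq_sym q) ?(negPf ne) ?(negPf ne') ?andbF /= ?scaler0.
Qed.

Lemma sum_pr (w : nat -> algC) p q v :
  \sum_(p' < n.+1) \sum_(q' < n.+1) w p' *: pr p' q' (pr p q v) = w p *: pr p q v.
Proof.
rewrite (_ : \sum_(_ < _) _ = \sum_(p' < n.+1) \sum_(q' < n.+1)
   (if ((p' : nat) == p) && ((q' : nat) == q) then w p' *: pr p' q' v else 0)).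
  rewrite (sum2if (fun p0 q0 => w p0 *: pr p0 q0 v)); case: ifP => // /negbT; rewrite negb_and -!leqNgt => h.
  by rewrite bnd ?scaler0 //; case/orP: h; [left|right].
apply: eq_bigr => p' _; apply: eq_bigr => q' _.
by rewrite prpr; case: ifP; rewrite ?scaler0.
Qed.

Definition sg v := \sum_(p < n.+1) \sum_(q < n.+1) ((-1) ^+ p : algC) *: pr p q v.

Lemma pr_sg p q v : pr p q (sg v) = (-1) ^+ p *: pr p q v.
Proof. exact: pr_sum. Qed.

Lemma sgD x y : sg (x + y) = sg x + sg y.
Proof. by apply: ext => p q; rewrite pr_sg !prD !pr_sg scalerDr. Qed.
Lemma sgZ a x : sg (a *: x) = a *: sg x.
Proof. by apply: ext => p q; rewrite pr_sg !prZ !pr_sg !scalerA mulrC. Qed.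
Lemma sgN x : sg (- x) = - sg x.
Proof. by rewrite -scaleN1r sgZ scaleN1r. Qed.
Lemma sg0 : sg 0 = 0.
Proof. by rewrite -(scale0r 0) sgZ !scale0r. Qed.


Lemma sgK v : sg (sg v) = v.
Proof.
apply: ext => p q; rewrite !pr_sg scalerA -exprMn mulrNN mulr1 expr1n scale1r //.
Qed.

Lemma pr0del q w : pr 0 q (del w) = 0.
Proof.
rewrite (dec w) dS prS; apply: big1 => p _; rewrite dS prS; apply: big1 => q' _.
by rewrite dpr prpr.
Qed.

Lemma pr0delb p w : pr p 0 (delb w) = 0.
Proof.
rewrite (dec w) bS prS; apply: big1 => p' _; rewrite bS prS; apply: big1 => q' _.
by rewrite dbpr prpr andbF.
Qed.

Lemma del_sg v : del (sg v) = - sg (del v).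
Proof.
apply: ext => p q; rewrite prN pr_sg; case: p => [|p].
  by rewrite !pr0del scaler0 oppr0.
by rewrite -!dpr pr_sg dZ exprS mulN1r scaleNr opprK.
Qed.

Lemma delb_sg v : delb (sg v) = sg (delb v).
Proof.
apply: ext => p q; rewrite pr_sg; case: q => [|q].
  by rewrite !pr0delb scaler0.
by rewrite -!dbpr pr_sg bZ.
Qed.

Definition Deg (k : int) v := forall p q, Posz (p + q)%N != k -> pr p q v = 0.

Lemma sumif2 (F : nat -> V) (c : nat -> bool) N j :
  \sum_(p < N) (if (j == (p : nat)) && c p then F p else 0) = if (j < N)%N && c j then F j else 0.
Proof.
elim: N => [|N IH]; first by rewrite big_ord0.
rewrite big_ord_recr /= IH ltnS.
case: (ltngtP j N) => [h|h|->]; rewrite ?addr0 ?eqxx ?ltnn ?add0r //=.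
Qed.

Lemma degP k v : is_deg pr k v <-> Deg k v.
Proof.
split.
- case: k => [m|m] /= hv a b hne; last by rewrite hv pr0.
  rewrite hv prS; apply: big1 => p _; rewrite prpr.
  case: ifP => // /andP [/eqP e1 /eqP e2]; exfalso; move: hne.
  by rewrite e1 e2 subnKC ?eqxx // -ltnS ltn_ord.
- case: k => [m|m] /= hv; last by apply: ext => a b; rewrite hv ?pr0.
  apply: ext => a b; rewrite prS.
  under eq_bigr => p _ do rewrite prpr.
  rewrite (sumif2 (fun _ => pr a b v) (fun p => b == (m - p)%N)).
  case: (eqVneq (Posz (a + b)) (Posz m)) => [[e]|ne]; last first.
    by rewrite (hv a b ne); case: ifP.
  by rewrite -e addKn eqxx ltnS leq_addr.
Qed.

Lemma Deg0 k : Deg k 0. Proof. by move=> p q _; rewrite pr0. Qed.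
Lemma DegD k x y : Deg k x -> Deg k y -> Deg k (x + y).
Proof. by move=> hx hy p q h; rewrite prD hx ?hy ?addr0. Qed.
Lemma DegZ k a x : Deg k x -> Deg k (a *: x).
Proof. by move=> hx p q h; rewrite prZ hx ?scaler0. Qed.
Lemma DegN k x : Deg k x -> Deg k (- x).
Proof. by move=> hx; rewrite -scaleN1r; apply: DegZ. Qed.
Lemma DegB k x y : Deg k x -> Deg k y -> Deg k (x - y).
Proof. by move=> hx hy; apply: DegD => //; apply: DegN. Qed.
Lemma Deg_sg k x : Deg k x -> Deg k (sg x).
Proof. by move=> hx p q h; rewrite pr_sg hx ?scaler0. Qed.
Lemma Deg_del k x : Deg k x -> Deg (k + 1) (del x).
Proof.
move=> hx [|p] q h; first by rewrite pr0del.
rewrite -dpr hx ?lin0 //.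
by apply: contraNneq h => e; rewrite addSn -addn1 PoszD e.
Qed.
Lemma Deg_delb k x : Deg k x -> Deg (k + 1) (delb x).
Proof.
move=> hx p [|q] h; first by rewrite pr0delb.
rewrite -dbpr hx ?lin0 //.
by apply: contraNneq h => e; rewrite addnS -addn1 PoszD e.
Qed.

Lemma two_eq0 (x : V) : x + x = 0 -> x = 0.
Proof. by rewrite -mulr2n -scaler_nat => /eqP; rewrite scaler_eq0 pnatr_eq0 /= => /eqP. Qed.

Lemma LJ0 g : LJ del delb g = 0 <-> del g = delb g.
Proof.
rewrite /LJ; split=> [/eqP|->]; last by rewrite subrr scaler0.
by rewrite scaler_eq0 (negPf (neq0Ci _)) /= subr_eq0 => /eqP.
Qed.

Lemma Jcl k a : J_closed pr del delb k a <-> [/\ Deg k a, del a = 0 & delb a = 0].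
Proof.
split.
- case=> /degP hd /LJ0 e; rewrite /dd e => /two_eq0 h; split => //; by rewrite e.
- case=> hd da db; split; first exact/degP.
  + by apply/LJ0; rewrite da db.
  + by rewrite /dd da db addr0.
Qed.

Let adb v : del (delb v) = - delb (del v).
Proof. by rewrite anti opprK. Qed.

Lemma ddbar_J k a e : Deg (k - 2) e -> a = del (delb e) -> J_exact pr del delb k a.
Proof.
move=> he ->; exists (2^-1 *: (delb e - del e)); split.
- apply/degP; apply: DegZ; apply: DegB.
  + by have := Deg_delb he; rewrite (_ : k - 2 + 1 = k - 1) //; lia.
  + by have := Deg_del he; rewrite (_ : k - 2 + 1 = k - 1) //; lia.
- by apply/LJ0; rewrite dZ bZ dB bB dd0 dbdb0 anti subr0 sub0r opprK.
- have h2 : (2^-1 + 2^-1 : algC) = 1.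
    by field.
  by rewrite /dd dZ bZ dB bB dd0 dbdb0 anti subr0 sub0r opprK -scalerDl h2 scale1r.
Qed.

Lemma half k a c : Deg (k - 2) c -> a + a = del (delb c) -> J_exact pr del delb k a.
Proof.
move=> hc e; apply: (@ddbar_J k a (2^-1 *: c)); first exact: DegZ.
rewrite bZ dZ -e -mulr2n -scaler_nat scalerA mulVf ?scale1r // pnatr_eq0 //.
Qed.

Lemma fwd_inj k : ddbar_lemma pr del delb k -> psi_injective pr del delb k.
Proof.
move=> hdd a /Jcl [ha da db] [b [/degP hb eab]].
have Db : Deg k (del b) by have := Deg_del hb; rewrite subrK.
have Dbb : Deg k (delb b) by have := Deg_delb hb; rewrite subrK.
have [c1 [/degP hc1 e1]] : exists c, is_deg pr (k - 2) c /\ del b + delb b = del (delb c).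
  apply/(hdd _ _).1; first by apply/degP; apply: DegD.
  split; first by rewrite dD dd0 -eab da addr0.
  split; first by rewrite bD anti dbdb0 -eab da oppr0 addr0.
  by exists b; split => //; apply/degP.
have [c2 [/degP hc2 e2]] : exists c, is_deg pr (k - 2) c /\ del (sg b) + delb (sg b) = del (delb c).
  apply/(hdd _ _).1; first by apply/degP; rewrite del_sg delb_sg; apply: DegD; [apply: DegN|]; apply: Deg_sg.
  split; first by rewrite dD dd0 delb_sg del_sg -eab da sg0 oppr0 add0r.
  split; first by rewrite bD anti dbdb0 delb_sg del_sg -eab da sg0 !oppr0 addr0.
  exists (sg b); split => //; apply/degP; exact: Deg_sg.
apply: (@half k a (c1 - sg c2)); first by apply: DegB => //; apply: Deg_sg.
have e3 : a - del b = - del (delb (sg c2)).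
  by rewrite delb_sg del_sg opprK -e2 del_sg delb_sg -eab sgD sgN !sgK addrC.
rewrite bB dB -e3 -e1 -eab [del b + a]addrC -addrA [del b + _]addrC subrK //.
Qed.

Lemma fwd_surj k : ddbar_lemma pr del delb k -> psi_surjective pr del delb (k - 1).
Proof.
move=> hdd b [/degP hb db0].
have Db : Deg k (del b) by have := Deg_del hb; rewrite subrK.
have [e [/degP he ee]] : exists c, is_deg pr (k - 2) c /\ del b = del (delb c).
  apply/(hdd _ _).1; first exact/degP.
  split; first by rewrite dd0.
  split; first by rewrite anti db0 d0 oppr0.
  by exists b; split; [apply/degP|rewrite /dd db0 addr0].
have Dde : Deg (k - 1) (delb e).
  by have := Deg_delb he; rewrite (_ : k - 2 + 1 = k - 1) //; lia.
exists (b - delb e); split.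
  apply/Jcl; split; first exact: DegB.
  - by rewrite dB -ee subrr.
  - by rewrite bB db0 dbdb0 subrr.
exists e; split; last by rewrite opprB addrC subrK.
by apply/degP; rewrite (_ : k - 1 - 1 = k - 2) //; lia.
Qed.

Lemma keyL k g : psi_injective pr del delb k -> psi_surjective pr del delb (k - 1) ->
  Deg (k - 1) g -> delb (del g) = 0 ->
  exists c, Deg (k - 2) c /\ del g - delb g = del (delb c).
Proof.
move=> hinj hsurj hg h0.
have [h [/degP hh /LJ0 dh ex]] : J_exact pr del delb k (delb g).
  apply: hinj.
    apply/Jcl; split.
    - by have := Deg_delb hg; rewrite subrK.
    - by rewrite adb h0 oppr0.
    - exact: dbdb0.
  by exists g; split => //; apply/degP.
have [a' [/Jcl [_ da' _] [c [/degP hc ebb]]]] : exists a, J_closed pr del delb (k - 1) a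
   /\ dbar_exact pr delb (k - 1) (g - h - h - a).
  apply: hsurj; split; first by apply/degP; apply: DegB => //; apply: DegB.
  by rewrite !bB ex /dd dh addrK subrr.
exists c; split; first by rewrite (_ : k - 2 = k - 1 - 1) //; lia.
have eg : g = a' + delb c + h + h by rewrite -ebb [a' + _]addrC !subrK.
have edb : delb g = del h + del h by rewrite ex /dd dh.
rewrite edb {1}eg !dD da' add0r -[_ + del h + del h]addrA addrK //.
Qed.

Lemma bwd k : psi_injective pr del delb k -> psi_surjective pr del delb (k - 1) ->
  ddbar_lemma pr del delb k.
Proof.
move=> hinj hsurj a ha; split; last first.
  case=> b [/degP hb ->]; split; first by rewrite dd0.
  split; first by rewrite anti dbdb0 d0 oppr0.
  exists (delb b); split; last by rewrite /dd dbdb0 addr0.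
  by apply/degP; have := Deg_delb hb; rewrite (_ : k - 2 + 1 = k - 1) //; lia.
case=> da [db [g [/degP hg eg]]].
have h0 : delb (del g) = 0.
  by move: db; rewrite eg /dd bD dbdb0 addr0.
have h1 : delb (del (sg g)) = 0 by rewrite del_sg bN delb_sg h0 sg0 oppr0.
have [c [hc ec]] := keyL hinj hsurj (Deg_sg hg) h1.
exists (sg c); split; first exact/degP/Deg_sg.
have esa : sg a = - del (delb c).
  by rewrite eg /dd sgD -ec del_sg delb_sg opprD !opprK.
by rewrite -(sgK a) esa sgN delb_sg del_sg.
Qed.

Lemma main k :
  [/\ (forall a, J_closed pr del delb k a -> dbar_closed pr delb k a),
      (forall a, J_exact pr del delb k a -> dbar_exact pr delb k a) &
      (ddbar_lemma pr del delb k <->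
         psi_injective pr del delb k /\ psi_surjective pr del delb (k - 1))].
Proof.
split.
- by move=> a /Jcl [ha _ db]; split => //; apply/degP.
- move=> a [g [hg /LJ0 e ->]]; exists (g + g); split.
    by apply/degP; apply: DegD; apply/degP.
  by rewrite /dd e bD.
- split; first by move=> h; split; [apply: fwd_inj|apply: fwd_surj].
  by case=> ??; apply: bwd.
Qed.
End DC.

Unset Implicit Arguments.
Theorem theorem3p22 (V : lmodType algC) (n : nat) (pr : nat -> nat -> V -> V)
    (del delb : V -> V) (k : int) :
  is_dcomplex pr del delb n ->
  [/\ (* psi^k is well defined *)
      (forall a, J_closed pr del delb k a -> dbar_closed pr delb k a),
      (forall a, J_exact pr del delb k a -> dbar_exact pr delb k a) &
      (* the ∂∂̄-lemma in degree k <-> psi^k injective and psi^{k-1} surjective *)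
      (ddbar_lemma pr del delb k <->
         psi_injective pr del delb k /\ psi_surjective pr del delb (k - 1))].
Proof. move=> H. exact: (main H). Qed.
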